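(* Let $f(x)=\mathbb{E}[F(x,\omega)]$ be $\tau$-strongly convex on $\mathbb{R}^n$ ($\tau>0$), and suppose: (a) for every $\omega\in\Omega$, $F(\cdot,\omega)$ is convex and continuously differentiable on $\mathbb{R}^n$, and $f$ is $C^1$ with $L$-Lipschitz continuous gradient; (b) for all $k\ge 0$, with $\bar w_{k,N_k}\triangleq \nabla f(x_k)-\frac{1}{N_k}\sum_{j=1}^{N_k}\nabla_x F(x_k,\omega_{j,k})$, there are $\nu_1,\nu_2>0$ with $\mathbb{E}[\|\bar w_{k,N_k}\|^2\mid\mathcal{F}_k]\le \frac{\nu_1^2\|x_k\|^2+\nu_2^2}{N_k}$ and $\mathbb{E}[\bar w_{k,N_k}\mid \mathcal{F}_k]=0$ almost surely; (c) every $H_k$ is $\mathcal{F}_k$-measurable, symmetric positive definite, and $\underline{\lambda}\mathbf{I}\preceq H_k\preceq\overline{\lambda}\mathbf{I}$ almost surely for all $k\ge0$, for constants $0<\underline{\lambda}\le\overline{\lambda}$. Let $\{x_k\}$ be generated by $x_{k+1}=x_k-\gamma_kH_k\frac{1}{N_k}\sum_{j=1}^{N_k}\nabla_xF(x_k,\omega_{j,k})$, where $\{N_k\}$ is an increasing sequence of positive integers with $N_0>\frac{2\nu_1^2\overline{\lambda}}{\tau^2\underline{\lambda}}$ and $\gamma_k=\frac{1}{L\overline{\lambda}}$ for all $k$. Then for all $k\ge1$, $$\mathbb{E}[f(x_{k+1})-f(x^* )]\le\Big(1-\frac{\tau\underline{\lambda}}{L\overline{\lambda}}+\frac{2\nu_1^2}{L\tau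 N_0}\Big)\mathbb{E}[f(x_k)-f(x^* )]+\frac{2\nu_1^2\|x^*\|^2+\nu_2^2}{2LN_k}.$$
   Context: $(\Omega,\mathcal{F},\mathbb{P})$ is a probability space, $\xi:\Omega\to\mathbb{R}^o$ a random vector, $F:\mathbb{R}^n\times\mathbb{R}^o\to\mathbb{R}$, and $F(x,\omega)$ abbreviates $F(x,\xi(\omega))$; the problem is $\min_{x\in\mathbb{R}^n}f(x)$ with (unique) minimizer $x^*$. At iteration $k$, $\omega_{1,k},\dots,\omega_{N_k,k}$ are the sampled realizations of $\omega$, $x_0\in\mathbb{R}^n$ is given, and $\mathcal{F}_k\triangleq\sigma\{x_0,x_1,\dots,x_{k-1}\}$. *)

(* Defs.v *)
From HB Require Import structures.
From mathcomp Require Import all_boot all_order all_algebra.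
From mathcomp Require Import all_classical all_reals all_analysis.
Set Implicit Arguments. Unset Strict Implicit. Unset Printing Implicit Defensive.
Import Order.TTheory GRing.Theory Num.Theory.
Import numFieldNormedType.Exports.
Local Open Scope classical_set_scope.
Local Open Scope ring_scope.

Definition dotv {R : realType} {n : nat} (u v : 'rV[R]_n) : R :=
  \sum_(i < n) u 0 i * v 0 i.
Definition sqnorm {R : realType} {n : nat} (u : 'rV[R]_n) : R := dotv u u.

Definition convex_fun {R : realType} {n : nat} (g : 'rV[R]_n -> R) : Prop :=
  forall (x y : 'rV[R]_n) (t : R), 0 <= t <= 1 ->
    g (t *: x + (1 - t) *: y) <= t * g x + (1 - t) * g y.

Definition strongly_convex {R : realType} {n : nat} (tau : R)
    (g : 'rV[R]_n -> R) : Prop :=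
  forall (x y : 'rV[R]_n) (t : R), 0 <= t <= 1 ->
    g (t *: x + (1 - t) *: y) <=
      t * g x + (1 - t) * g y - tau / 2 * t * (1 - t) * sqnorm (x - y).

Definition has_gradient {R : realType} {n : nat} (g : 'rV[R]_n -> R)
    (gr : 'rV[R]_n -> 'rV[R]_n) : Prop :=
  forall x : 'rV[R]_n, differentiable g x /\ forall v, 'd g x v = dotv (gr x) v.

Definition loewner_between {R : realType} {n : nat} (lo hi : R)
    (A : 'M[R]_n) : Prop :=
  forall v : 'rV[R]_n, lo * sqnorm v <= (v *m A *m v^T) 0 0 <= hi * sqnorm v.

Definition sym_pos_def {R : realType} {n : nat} (A : 'M[R]_n) : Prop :=
  A^T = A /\ forall v : 'rV[R]_n, v != 0 -> 0 < (v *m A *m v^T) 0 0.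

(* the sigma-algebra generated by the random vectors x_0, ..., x_{k-1}
   (generated by the coordinate preimages of Borel sets, which is the
   sigma-algebra generated by the R^n-valued maps with the Borel structure) *)
Definition gen_sigma {R : realType} {T : Type} {n : nat}
    (x : nat -> T -> 'rV[R]_n) (k : nat) : set (set T) :=
  <<s [set A | exists j i (B : set R),
         (j < k)%N /\ measurable B /\ A = (fun t => x j t 0 i) @^-1` B] >>.

Definition is_cond_exp {R : realType} {d} {T : measurableType d}
    (P : probability T R) (G : set (set T)) (Y Z : T -> R) : Prop :=
  [/\ P.-integrable setT (EFin \o Y),
      P.-integrable setT (EFin \o Z),
      (forall B : set R, measurable B -> G (Z @^-1` B)) &
      (forall A, G A -> (\int[P]_(t in A) (Y t)%:E = \int[P]_(t in A) (Z t)%:E)%E)].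

(* Main.v *)
Require Import Defs.
From HB Require Import structures.
From mathcomp Require Import all_boot all_order all_algebra.
From mathcomp Require Import all_classical all_reals all_analysis.
From mathcomp Require Import ring lra measurable_realfun.
Import Order.TTheory GRing.Theory Num.Theory.
Import numFieldNormedType.Exports.
Local Open Scope classical_set_scope.
Local Open Scope ring_scope.
Section LinAlg.
Context {R : realType} {n : nat}.
Implicit Types (u v w : 'rV[R]_n).

Lemma dotvE u v : dotv u v = (u *m v^T) 0 0.
Proof. by rewrite /dotv mxE; apply: eq_bigr => i _; rewrite mxE. Qed.

Lemma dotvC u v : dotv u v = dotv v u.
Proof. by rewrite /dotv; apply: eq_bigr => i _; rewrite mulrC. Qed.

Lemma dotvDl u v w : dotv (u + v) w = dotv u w + dotv v w.
Proof. by rewrite /dotv -big_split; apply: eq_bigr => i _; rewrite !mxE mulrDl. Qed.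

Lemma dotvZl (a : R) u v : dotv (a *: u) v = a * dotv u v.
Proof. by rewrite /dotv mulr_sumr; apply: eq_bigr => i _; rewrite !mxE mulrA. Qed.

Lemma dotvNl u v : dotv (- u) v = - dotv u v.
Proof. by rewrite -scaleN1r dotvZl mulN1r. Qed.

Lemma dotvBl u v w : dotv (u - v) w = dotv u w - dotv v w.
Proof. by rewrite dotvDl dotvNl. Qed.

Lemma dotvDr u v w : dotv w (u + v) = dotv w u + dotv w v.
Proof. by rewrite dotvC dotvDl !(dotvC w). Qed.
Lemma dotvZr (a : R) u v : dotv v (a *: u) = a * dotv v u.
Proof. by rewrite dotvC dotvZl dotvC. Qed.
Lemma dotvBr u v w : dotv w (u - v) = dotv w u - dotv w v.
Proof. by rewrite dotvC dotvBl !(dotvC w). Qed.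
Lemma dotvNr u v : dotv v (- u) = - dotv v u.
Proof. by rewrite dotvC dotvNl dotvC. Qed.

Lemma sqnorm_ge0 u : 0 <= sqnorm u.
Proof. by apply: sumr_ge0 => i _; rewrite -expr2 sqr_ge0. Qed.

Lemma sqnorm_eq0 u : sqnorm u = 0 -> u = 0.
Proof.
move=> h; apply/rowP => i; rewrite mxE.
have h2 : \sum_(j < n) u 0 j ^+ 2 = 0.
  by rewrite -[RHS]h /sqnorm /dotv; apply: eq_bigr => j _; rewrite expr2.
have := @psumr_eq0P _ _ xpredT (fun j => u 0 j ^+ 2) (fun j _ => sqr_ge0 (u 0 j)) h2 i isT.
by move/eqP; rewrite sqrf_eq0 => /eqP.
Qed.

Lemma dotv_young u v (a : R) : 0 < a -> 2 * dotv u v <= a * sqnorm u + a^-1 * sqnorm v.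
Proof.
move=> a0.
have := sqnorm_ge0 (a *: u - v).
rewrite /sqnorm dotvBl !dotvBr !dotvZl !dotvZr (dotvC v u) => h.
have : 0 <= a^-1 * (a * (a * dotv u u) - a * dotv u v - (a * dotv u v - dotv v v)).
  by rewrite mulr_ge0 // invr_ge0 ltW.
have ha : a != 0 by rewrite gt_eqF.
set p := dotv u u; set q := dotv u v; set r := dotv v v.
have -> : a^-1 * (a * (a * p) - a * q - (a * q - r)) = a * p - 2 * q + a^-1 * r.
  by field.
lra.
Qed.

Definition Bf (H : 'M[R]_n) u v := dotv (u *m H) v.

Lemma BfDl H u v w : Bf H (u + v) w = Bf H u w + Bf H v w.
Proof. by rewrite /Bf mulmxDl dotvDl. Qed.
Lemma BfNl H u v : Bf H (- u) v = - Bf H u v.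
Proof. by rewrite /Bf mulNmx dotvNl. Qed.
Lemma BfBl H u v w : Bf H (u - v) w = Bf H u w - Bf H v w.
Proof. by rewrite BfDl BfNl. Qed.
Lemma BfZl H a u v : Bf H (a *: u) v = a * Bf H u v.
Proof. by rewrite /Bf -scalemxAl dotvZl. Qed.
Lemma BfDr H u v w : Bf H w (u + v) = Bf H w u + Bf H w v.
Proof. by rewrite /Bf dotvDr. Qed.
Lemma BfBr H u v w : Bf H w (u - v) = Bf H w u - Bf H w v.
Proof. by rewrite /Bf dotvBr. Qed.
Lemma BfZr H a u v : Bf H v (a *: u) = a * Bf H v u.
Proof. by rewrite /Bf dotvZr. Qed.

Lemma BfC H u v : H^T = H -> Bf H u v = Bf H v u.
Proof.
move=> hs; rewrite /Bf !dotvE.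
have e (M : 'M[R]_1) : M 0 0 = M^T 0 0 by rewrite mxE.
by rewrite e !trmx_mul trmxK hs mulmxA.
Qed.

Lemma Bf_sq H lo hi v : H^T = H -> 0 <= lo -> 0 < hi ->
  loewner_between lo hi H -> sqnorm (v *m H) <= hi * Bf H v v.
Proof.
move=> hs lo0 hi0 hl.
set u := v *m H.
have Bvu : Bf H v u = sqnorm u by [].
have Buu : Bf H u u <= hi * sqnorm u.
  by have /andP[_] := hl u; rewrite /Bf dotvE.
have Bpos w : 0 <= Bf H w w.
  have /andP[+ _] := hl w; rewrite -dotvE -/(Bf H w w) => h.
  exact: le_trans (mulr_ge0 lo0 (sqnorm_ge0 w)) h.
have := Bpos (v - hi^-1 *: u).
rewrite !BfBl !BfBr !BfZl !BfZr (BfC H u v hs) Bvu.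
have hi0' : hi != 0 by rewrite gt_eqF.
move=> h.
have h1 : hi^-1 * (hi^-1 * Bf H u u) <= hi^-1 * sqnorm u.
  apply: ler_wpM2l; first by rewrite invr_ge0 ltW.
  apply: le_trans (ler_wpM2l _ Buu) _; first by rewrite invr_ge0 ltW.
  by rewrite mulrA mulVf // mul1r.
have h3 : Bf H v v - hi^-1 * sqnorm u >= 0.
  move: h h1; set a := hi^-1 * (hi^-1 * Bf H u u); set b := hi^-1 * sqnorm u.
  rewrite -/b; lra.
have : hi * (Bf H v v - hi^-1 * sqnorm u) >= 0 by apply: mulr_ge0 => //; exact: ltW.
rewrite mulrBr mulrA mulfV // mul1r; lra.
Qed.

End LinAlg.
Section Anal.
Context {R : realType} {n : nat}.
Implicit Types (u v w y z : 'rV[R]_n).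

Lemma phi_quot (f : 'rV[R]_n -> R) y v t :
  (fun h : R => h^-1 *: (((fun s : R => f (y + s *: v)) \o shift t) (h *: 1)
       - f (y + t *: v))) =
  (fun h : R => h^-1 *: ((f \o shift (y + t *: v)) (h *: v) - f (y + t *: v))).
Proof.
apply/funext => h /=; congr (_ *: (f _ - _)).
by rewrite /shift /= scalerDl [h%:A]mulr1 addrCA.
Qed.

Lemma phi_derive (f : 'rV[R]_n -> R) gradf y v t : has_gradient f gradf ->
  derivable (fun s : R => f (y + s *: v)) t 1 /\
  'D_1 (fun s : R => f (y + s *: v)) t = dotv (gradf (y + t *: v)) v.
Proof.
move=> hg; have [dif dd] := hg (y + t *: v); split.
  rewrite /derivable phi_quot; exact: diff_derivable.
rewrite /derive phi_quot -/(derive f _ v) deriveE //.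
Qed.


Lemma sqnormZ (a : R) u : sqnorm (a *: u) = a ^+ 2 * sqnorm u.
Proof. by rewrite /sqnorm dotvZl dotvZr mulrA expr2. Qed.

Lemma descent (f : 'rV[R]_n -> R) gradf (L : R) : 0 < L -> has_gradient f gradf ->
  (forall y z, sqnorm (gradf y - gradf z) <= L ^+ 2 * sqnorm (y - z)) ->
  forall y v, f (y + v) <= f y + dotv (gradf y) v + L / 2 * sqnorm v.
Proof.
move=> L0 hg hL y v.
set a := dotv (gradf y) v; set b := L / 2 * sqnorm v.
pose phi := fun s : R => f (y + s *: v).
pose psi := (phi - (fun s : R => a * s)) - (fun s : R => b * (s * s)).
have Dpsi (x : R) : is_derive x 1 psi (dotv (gradf (y + x *: v)) v - a - b * (x + x)).
  have [d1 d2] := phi_derive f gradf y v x hg.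
  have P1 : is_derive x 1 phi (dotv (gradf (y + x *: v)) v) by apply: DeriveDef.
  have P2 : is_derive x 1 (fun s : R => a * s) a.
    have := @is_deriveZ R R R id a x 1 1 (is_derive_id x 1).
    by rewrite [a *: 1]mulr1.
  have P3 : is_derive x 1 (fun s : R => b * (s * s)) (b * (x + x)).
    have := @is_deriveM R R id id x 1 1 1 (is_derive_id x 1) (is_derive_id x 1).
    move=> /(@is_deriveZ R R R _ b x 1) /=.
    by rewrite /GRing.scale /= !mulr1.
  exact: is_deriveB (is_deriveB P1 P2) P3.
have cpsi : continuous psi.
  move=> x; apply: differentiable_continuous; apply/derivable1_diffP.
  exact: (Dpsi x).(ex_derive).
have key : psi 1 <= psi 0.
  apply: (@ler0_derive1_nincr R psi 0 1) => //.
  - move=> x; rewrite in_itv /= => /andP[x0 x1].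
    rewrite derive1E (Dpsi x).(derive_val).
    set u := gradf (y + x *: v) - gradf y.
    have hu : sqnorm u <= L ^+ 2 * (x ^+ 2 * sqnorm v).
      by have := hL (y + x *: v) y; rewrite addrAC subrr add0r sqnormZ.
    have al0 : 0 < (L * x)^-1 by rewrite invr_gt0 mulr_gt0.
    have Y := dotv_young u v _ al0.
    have h2 : (L * x)^-1 * sqnorm u <= (L * x)^-1 * (L ^+ 2 * (x ^+ 2 * sqnorm v)).
      by apply: ler_wpM2l => //; exact: ltW.
    have e1 : (L * x)^-1 * (L ^+ 2 * (x ^+ 2 * sqnorm v)) = L * x * sqnorm v.
      by field; rewrite !gt_eqF.
    rewrite invrK e1 in Y h2.
    have : dotv u v = dotv (gradf (y + x *: v)) v - a by rewrite /u dotvBl.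
    rewrite /b; lra.
  - exact: continuous_subspaceT.
have epsi (s : R) : psi s = f (y + s *: v) - a * s - b * (s * s) by [].
move: key; rewrite !epsi scale1r scale0r addr0 !mulr0 !mulr1 !subr0.
rewrite /b; lra.
Qed.

Lemma convcomb_eq (h : R) y z : h *: z + (1 - h) *: y = y + h *: (z - y).
Proof. by apply/rowP => i; rewrite !mxE; ring. Qed.

Lemma grad_sc (f : 'rV[R]_n -> R) gradf (tau : R) : 0 <= tau ->
  has_gradient f gradf -> strongly_convex tau f ->
  forall y z, f y + dotv (gradf y) (z - y) + tau / 2 * sqnorm (z - y) <= f z.
Proof.
move=> tau0 hg sc y z.
set v := z - y; set S := sqnorm v.
set C := f z - f y - tau / 2 * S.
pose phi := fun s : R => f (y + s *: v).
have [d1 d2] := phi_derive f gradf y v 0 hg.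
rewrite scale0r addr0 in d2.
set D := dotv (gradf y) v in d2 *.
pose q := fun h : R => h^-1 *: ((phi \o shift 0) (h *: 1) - phi 0).
have Hc : q @ 0^' --> D.
  by rewrite -d2; exact: d1.
have qle (h : R) : 0 < h -> h <= 1 -> q h <= C + tau / 2 * S * h.
  move=> h0 h1.
  have := sc z y h; rewrite h1 ltW //= convcomb_eq -/v -/S => /(_ isT) hs.
  rewrite /q /phi /shift /= [h%:A]mulr1 addr0 scale0r addr0.
  rewrite /GRing.scale /= ler_pdivrMl //.
  rewrite /C; move: hs; nra.
suff : D <= C by rewrite /C; lra.
rewrite leNgt; apply/negP => DC.
set e := (D - C) / 2.
have e0 : 0 < e by rewrite divr_gt0 // subr_gt0.
move/cvgrPdist_lt: Hc => /(_ e e0).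
rewrite /dnbhs /within /= => /nbhs_ballP [del /= del0 Hd].
set h := Num.min (del / 2) (Num.min (1 / 2) (e / (tau * S + 1))).
have hS : 0 <= S by exact: sqnorm_ge0.
have tS : 0 <= tau * S by exact: mulr_ge0.
have h0 : 0 < h.
  rewrite /h !lt_min !divr_gt0 //; lra.
have hdel : h <= del / 2 by rewrite /h ge_min lexx.
have h1 : h <= 1 / 2 by rewrite /h !ge_min lexx orbT.
have he : h <= e / (tau * S + 1) by rewrite /h !ge_min lexx !orbT.
have := Hd h.
rewrite /ball /= sub0r normrN gtr0_norm //.
have hd : h < del by lra.
move=> /(_ hd (lt0r_neq0 h0)) Hq.
have h11 : h <= 1 by lra.
have := qle h h0 h11.
have : tau * S * h <= e.
  rewrite ler_pdivlMr in he; last lra.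
  nra.
move: Hq; rewrite ltr_distl /e; lra.
Qed.

Lemma sqnormN u : sqnorm (- u) = sqnorm u.
Proof. by rewrite /sqnorm dotvNl dotvNr opprK. Qed.

Lemma PL_ineq (f : 'rV[R]_n -> R) gradf (tau : R) xs : 0 < tau ->
  has_gradient f gradf -> strongly_convex tau f -> (forall y, f xs <= f y) ->
  forall y, 2 * tau * (f y - f xs) <= sqnorm (gradf y).
Proof.
move=> t0 hg sc hmin y.
have G := grad_sc _ _ _ (ltW t0) hg sc y xs.
set v := xs - y in G; set g := gradf y in G *.
have tinv : 0 < tau^-1 by rewrite invr_gt0.
have Y := dotv_young (- g) v _ tinv.
rewrite dotvNl sqnormN invrK in Y.
have e1 : tau * (tau^-1 * sqnorm g) = sqnorm g by rewrite mulrA mulfV ?gt_eqF // mul1r.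
have : tau * (2 * - dotv g v) <= tau * (tau^-1 * sqnorm g + tau * sqnorm v).
  by apply: ler_wpM2l => //; exact: ltW.
rewrite mulrDr e1.
have : tau * (f xs - f y) >= tau * (dotv g v + tau / 2 * sqnorm v).
  by apply: ler_wpM2l; [exact: ltW | move: G; lra].
move=> h1 h2.
have -> : 2 * tau * (f y - f xs) = - (2 * (tau * f xs)) + 2 * (tau * f y) by ring.
move: h1 h2; rewrite !mulrDr.
set p := tau * dotv g v.
have -> : tau * (2 * - dotv g v) = - (2 * p) by rewrite /p; ring.
have -> : tau * (tau / 2 * sqnorm v) = (tau * (tau * sqnorm v)) / 2 by ring.
set r := tau * (tau * sqnorm v); lra.
Qed.

Lemma dist_bound (f : 'rV[R]_n -> R) (tau : R) xs : 0 < tau ->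
  strongly_convex tau f -> (forall y, f xs <= f y) ->
  forall y, tau / 2 * sqnorm (y - xs) <= f y - f xs.
Proof.
move=> t0 sc hmin y.
set A := tau / 2 * sqnorm (y - xs); set B := f y - f xs.
have B0 : 0 <= B by rewrite subr_ge0.
have A0 : 0 <= A by rewrite mulr_ge0 ?sqnorm_ge0 // divr_ge0 // ltW.
rewrite leNgt; apply/negP => AB.
have Apos : 0 < A by lra.
set t := (A - B) / (2 * A).
have t0' : 0 < t by rewrite divr_gt0 //; lra.
have t1 : t <= 1 / 2.
  rewrite /t ler_pdivrMr; last lra.
  lra.
have t01 : 0 <= t <= 1 by apply/andP; split; [exact: ltW | lra].
have hs := sc y xs t t01.
have hm := hmin (t *: y + (1 - t) *: xs).
have : (1 - t) * A <= B.
  have : t * ((1 - t) * A) <= t * B.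
    have -> : t * ((1 - t) * A) = tau / 2 * t * (1 - t) * sqnorm (y - xs) by rewrite /A; ring.
    have -> : t * B = t * f y + (1 - t) * f xs - f xs by rewrite /B; ring.
    lra.
  by rewrite ler_pM2l.
have : (1 - t) * A = (A + B) / 2.
  rewrite /t; field; lra.
move=> ->; lra.
Qed.

Lemma sqnormD_le u v : sqnorm (u + v) <= 2 * sqnorm u + 2 * sqnorm v.
Proof.
have := sqnorm_ge0 (u - v).
rewrite /sqnorm !dotvBl !dotvBr !dotvDl !dotvDr (dotvC v u); lra.
Qed.

Lemma tau_le_L (f : 'rV[R]_n -> R) gradf (tau L : R) (xs : 'rV[R]_n) : (0 < n)%N -> 0 < tau -> 0 < L ->
  has_gradient f gradf -> strongly_convex tau f ->
  (forall y z, sqnorm (gradf y - gradf z) <= L ^+ 2 * sqnorm (y - z)) ->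
  tau <= L.
Proof.
move=> n0 t0 L0 hg sc hL.
set v := const_mx 1 : 'rV[R]_n.
have Sv : sqnorm v = n%:R.
  rewrite /sqnorm /dotv (eq_bigr (fun=> 1)); last by move=> i _; rewrite !mxE mulr1.
  by rewrite sumr_const card_ord.
have Sv0 : 0 < sqnorm v by rewrite Sv ltr0n.
have G := grad_sc _ _ _ (ltW t0) hg sc xs (xs + v).
have Dd := descent _ _ _ L0 hg hL xs v.
rewrite (_ : xs + v - xs = v) in G; last by rewrite addrAC subrr add0r.
have : tau / 2 * sqnorm v <= L / 2 * sqnorm v by lra.
rewrite ler_pM2r // ler_pM2r //; by rewrite invr_gt0.
Qed.

Lemma step_pointwise (f : 'rV[R]_n -> R) gradf xs (tau L lo hi : R) y g (H : 'M[R]_n) :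
  0 < tau -> 0 < L -> 0 < lo -> lo <= hi ->
  has_gradient f gradf -> strongly_convex tau f -> (forall z, f xs <= f z) ->
  (forall y z, sqnorm (gradf y - gradf z) <= L ^+ 2 * sqnorm (y - z)) ->
  H^T = H -> loewner_between lo hi H ->
  f (y - (1 / (L * hi)) *: (g *m H^T)) - f xs <=
    (1 - tau * lo / (L * hi)) * (f y - f xs) + (2 * L)^-1 * sqnorm (gradf y - g).
Proof.
move=> t0 L0 lo0 lohi hg sc hmin hL hs hl.
have hi0 : 0 < hi by exact: lt_le_trans lohi.
set G := 1 / (L * hi).
have G0 : 0 < G by rewrite divr_gt0 // mulr_gt0.
set gf := gradf y; set w := gf - g.
have gE : g = gf - w by rewrite /w opprB addrC subrK.
rewrite hs.
set v := - (G *: (g *m H)).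
have F1 := descent _ _ _ L0 hg hL y v.
rewrite -/gf /v dotvNr dotvZr sqnormN sqnormZ (dotvC gf) -/(Bf H g gf) in F1.
set Sgh := sqnorm (g *m H) in F1.
have Bsq : Sgh <= hi * Bf H g g := Bf_sq H lo hi g hs (ltW lo0) hi0 hl.
have F2 : L / 2 * (G ^+ 2 * Sgh) <= G / 2 * Bf H g g.
  have : L / 2 * (G ^+ 2 * Sgh) <= L / 2 * (G ^+ 2 * (hi * Bf H g g)).
    apply: ler_wpM2l; first by rewrite divr_ge0 // ltW.
    by apply: ler_wpM2l => //; rewrite exprn_ge0 // ltW.
  suff -> : L / 2 * (G ^+ 2 * (hi * Bf H g g)) = G / 2 * Bf H g g by [].
  by rewrite /G; field; rewrite !gt_eqF.
have F3 : - (G * Bf H g gf) + G / 2 * Bf H g g =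
    - (G / 2 * Bf H gf gf) + G / 2 * Bf H w w.
  rewrite /w !BfBl !BfBr (BfC H gf g hs); lra.
have LB u : lo * sqnorm u <= Bf H u u /\ Bf H u u <= hi * sqnorm u.
  by have /andP[] := hl u; rewrite /Bf dotvE.
have F4 : G / 2 * (lo * sqnorm gf) <= G / 2 * Bf H gf gf.
  by apply: ler_wpM2l; [rewrite divr_ge0 // ltW | case: (LB gf)].
have F5 : G / 2 * Bf H w w <= (2 * L)^-1 * sqnorm w.
  have : G / 2 * Bf H w w <= G / 2 * (hi * sqnorm w).
    by apply: ler_wpM2l; [rewrite divr_ge0 // ltW | case: (LB w)].
  suff -> : G / 2 * (hi * sqnorm w) = (2 * L)^-1 * sqnorm w by [].
  by rewrite /G; field; rewrite !gt_eqF.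
have PL := PL_ineq _ _ _ xs t0 hg sc hmin y.
rewrite -/gf in PL.
set a := f y - f xs in PL *.
have F6 : G / 2 * (lo * (2 * tau * a)) <= G / 2 * (lo * sqnorm gf).
  apply: ler_wpM2l; first by rewrite divr_ge0 // ltW.
  by apply: ler_wpM2l => //; exact: ltW.
have E6 : G / 2 * (lo * (2 * tau * a)) = tau * lo / (L * hi) * a.
  by rewrite /G; field; rewrite !gt_eqF.
rewrite E6 in F6.
set q := tau * lo / (L * hi) in F6 *.
move: F1 F2 F3 F4 F5 F6.
set B1 := G * Bf H g gf; set B2 := G / 2 * Bf H g g.
set B3 := G / 2 * Bf H gf gf; set B4 := G / 2 * Bf H w w.
set S1 := L / 2 * (G ^+ 2 * Sgh).
rewrite /a; lra.
Qed.
End Anal.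
Section Meas.
Context {d : measure_display} {T : measurableType d} {R : realType} {n : nat}.
Variable X : T -> 'rV[R]_n.
Hypothesis mX : forall i : 'I_n, measurable_fun setT (fun t => X t 0 i).

Definition gridc (m : nat) (z : {ffun 'I_n -> int}) (j : 'I_n) : R :=
  (z j)%:~R / (m.+1)%:R.
Definition gbox (m : nat) (z : {ffun 'I_n -> int}) : set 'rV[R]_n :=
  [set w | forall j, `|w 0 j - gridc m z j| < (m.+1)%:R^-1].

Lemma meas_box m z : measurable (X @^-1` gbox m z).
Proof.
have -> : X @^-1` gbox m z = \big[setI/setT]_(j <- index_enum 'I_n)
    ((fun t => X t 0 j) @^-1` ball (gridc m z j) (m.+1)%:R^-1).
  rewrite -bigcap_seq; apply/seteqP; split => t /=.
    move=> h j _; rewrite /ball /= distrC; exact: h.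
  move=> h j; have := h j (mem_index_enum j); rewrite /ball /= distrC; exact.
apply: bigsetI_measurable => j _.
by rewrite -[X in measurable X]setTI; apply: mX => //; exact: measurable_ball.
Qed.

Lemma meas_open (U : set 'rV[R]_n) : open U -> measurable (X @^-1` U).
Proof.
move=> oU.
pose S := fun p : nat * {ffun 'I_n -> int} =>
  if pselect (gbox p.1 p.2 `<=` U) then X @^-1` gbox p.1 p.2 else set0.
have -> : X @^-1` U = \bigcup_p S p.
  apply/seteqP; split => t /=; last first.
    move=> [p _]; rewrite /S; case: pselect => // sub.
    by move=> /sub.
  move=> Ut.
  have : nbhs (X t) U by apply: open_nbhs_nbhs; split.
  move=> /nbhs_ballP [e /= e0 be].
  pose m := Num.truncn (2 / e).
  have m1 : 2 / e < (m.+1)%:R by exact: truncnS_gt.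
  pose z := [ffun j : 'I_n => Num.floor ((m.+1)%:R * X t 0 j)].
  have mpos : 0 < (m.+1)%:R :> R by rewrite ltr0n.
  have inbox : gbox m z (X t).
    move=> j; rewrite /gridc ffunE.
    have := floor_le ((m.+1)%:R * X t 0 j).
    have := floorD1_gt ((m.+1)%:R * X t 0 j).
    rewrite intrD /=.
    set F := (Num.floor _)%:~R => h1 h2.
    have ee : X t 0 j - F / (m.+1)%:R = ((m.+1)%:R * X t 0 j - F) / (m.+1)%:R.
      by field; rewrite gt_eqF.
    rewrite ee ger0_norm; last by rewrite divr_ge0 ?subr_ge0 // ltW.
    by rewrite -[X in _ < X]mul1r ltr_pM2r ?invr_gt0 //; lra.
  have sub : gbox m z `<=` U.
    move=> w wb; apply: be; split => // i j; rewrite (ord1 i) /ball /=.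
    have h1 := inbox j; have h2 := wb j.
    have h3 : 2 / (m.+1)%:R < e.
      by rewrite ltr_pdivrMr // mulrC -ltr_pdivrMr.
    rewrite (_ : X t 0 j - w 0 j = (X t 0 j - gridc m z j) - (w 0 j - gridc m z j)); last by ring.
    apply: (le_lt_trans (ler_normB _ _)).
    have ee : 2 / (m.+1)%:R = (m.+1)%:R^-1 + (m.+1)%:R^-1 :> R by field; rewrite gt_eqF.
    move: h1 h2 h3; rewrite ee; set r := (m.+1)%:R^-1.
    set A := `|X t 0 j - _|; set B := `|w 0 j - _|; lra.
  exists (m, z) => //; rewrite /S /=; case: pselect => // /(_ sub) //.
apply: countable_bigcupT_measurable; first exact: countableP.
move=> p; rewrite /S; case: pselect => [h|h]; [exact: meas_box|exact: measurable0].
Qed.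

Lemma meas_comp_cont (g : 'rV[R]_n -> R) : continuous g -> measurable_fun setT (g \o X).
Proof.
move=> /continuousP cg; apply: (measurability _ (RGenOpens.measurableE R)).
move=> _ [_ [a [b ->] <-]]; rewrite setTI comp_preimage.
by apply: meas_open; apply: cg; exact: interval_open.
Qed.
End Meas.
Theorem mainTheorem1
  (R : realType) (n o : nat)
  (* (Omega, F, P): the probability space of omega, and the random vector xi *)
  (d : measure_display) (Omega : measurableType d) (P : probability Omega R)
  (xi : Omega -> 'rV[R]_o)
  (* (Theta, Q): the probability space on which the algorithm runs *)
  (d' : measure_display) (Theta : measurableType d') (Q : probability Theta R)
  (F : 'rV[R]_n -> 'rV[R]_o -> R) (gradF : 'rV[R]_n -> 'rV[R]_o -> 'rV[R]_n)
  (f : 'rV[R]_n -> R) (gradf : 'rV[R]_n -> 'rV[R]_n) (xstar : 'rV[R]_n)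
  (tau L nu1 nu2 lam_lo lam_hi : R)
  (N : nat -> nat)
  (om : nat -> nat -> Theta -> Omega)       (* om j k = omega_{j+1,k} *)
  (H : nat -> Theta -> 'M[R]_n)
  (x0 : 'rV[R]_n) (x : nat -> Theta -> 'rV[R]_n) :
  (* xi is a random vector *)
  (forall i : 'I_o, measurable_fun setT (fun w => xi w 0 i)) ->
  (* f(x) = E[F(x, omega)] *)
  (forall y, P.-integrable setT (fun w => (F y (xi w))%:E)) ->
  (forall y, ((f y)%:E = \int[P]_w (F y (xi w))%:E)%E) ->
  0 < tau -> strongly_convex tau f ->
  (forall y, f xstar <= f y) ->
  (* (a) *)
  (forall w : Omega, convex_fun (fun y => F y (xi w))) ->
  (forall w : Omega, has_gradient (fun y => F y (xi w)) (fun y => gradF y (xi w))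
                     /\ continuous (fun y => gradF y (xi w))) ->
  0 < L -> has_gradient f gradf ->
  (forall y z, sqnorm (gradf y - gradf z) <= L ^+ 2 * sqnorm (y - z)) ->
  (* step sizes and sample sizes *)
  (forall k, (0 < N k)%N) -> (forall k, (N k <= N k.+1)%N) ->
  2 * nu1 ^+ 2 * lam_hi / (tau ^+ 2 * lam_lo) < (N 0)%:R ->
  (* the iteration, with gamma_k = 1 / (L * lam_hi) *)
  (forall t, x 0 t = x0) ->
  (forall k t, x k.+1 t = x k t -
      (1 / (L * lam_hi)) *:
        (((N k)%:R^-1 *: \sum_(j < N k) gradF (x k t) (xi (om j k t)))
           *m (H k t)^T)) ->
  (* the iterates are random vectors *)
  (forall k (i : 'I_n), measurable_fun setT (fun t => x k t 0 i)) ->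
  (* (b) *)
  0 < nu1 -> 0 < nu2 ->
  (forall k,
     let wbar := fun t => gradf (x k t) -
        (N k)%:R^-1 *: \sum_(j < N k) gradF (x k t) (xi (om j k t)) in
     (exists Z, is_cond_exp Q (gen_sigma x k) (fun t => sqnorm (wbar t)) Z /\
        {ae Q, forall t, Z t <= (nu1 ^+ 2 * sqnorm (x k t) + nu2 ^+ 2) / (N k)%:R}) /\
     (forall i : 'I_n,
        is_cond_exp Q (gen_sigma x k) (fun t => wbar t 0 i) (fun _ => 0))) ->
  (* (c) *)
  0 < lam_lo -> lam_lo <= lam_hi ->
  (forall k (i j : 'I_n) (B : set R), measurable B ->
     gen_sigma x k ((fun t => H k t i j) @^-1` B)) ->
  (forall k t, sym_pos_def (H k t)) ->
  (forall k, {ae Q, forall t, loewner_between lam_lo lam_hi (H k t)}) ->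
  (* conclusion *)
  forall k : nat, (1 <= k)%N ->
    let rate : R := 1 - tau * lam_lo / (L * lam_hi) + 2 * nu1 ^+ 2 / (L * tau * (N 0)%:R) in
    let err : R := (2 * nu1 ^+ 2 * sqnorm xstar + nu2 ^+ 2) / (2 * L * (N k)%:R) in
    (\int[Q]_t ((f (x k.+1 t) - f xstar)%:E) <=
      rate%:E * \int[Q]_t ((f (x k t) - f xstar)%:E) + err%:E)%E.
Proof.
move=> mxi Fint fE tau0 sc hmin Fconv Fgrad L0 hg hL Npos Nmono N0big hx0 hx mx
  nu10 nu20 hb lo0 lohi Hmeas Hsym Hloew k k1; cbv zeta.
set rate := (1 - tau * lam_lo / (L * lam_hi) + 2 * nu1 ^+ 2 / (L * tau * (N 0)%:R)).
set err := ((2 * nu1 ^+ 2 * sqnorm xstar + nu2 ^+ 2) / (2 * L * (N k)%:R)).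
have hs j t : (H j t)^T = H j t := (Hsym j t).1.
have fcont : continuous f by move=> y; exact: differentiable_continuous (hg y).1.
pose a j t := f (x j t) - f xstar.
have a0 j t : 0 <= a j t by rewrite subr_ge0.
have ma j : measurable_fun setT (a j).
  apply: measurable_funB; first exact: (meas_comp_cont (x j) (mx j) f fcont).
  exact: measurable_cst.
have err0 : 0 <= err.
  apply: divr_ge0.
  - apply: addr_ge0; last exact: sqr_ge0.
    apply: mulr_ge0; last exact: sqnorm_ge0.
    by apply: mulr_ge0 => //; exact: sqr_ge0.
  - by apply: mulr_ge0 => //; apply: mulr_ge0 => //; exact: ltW.
have [n0|npos] := posnP n.
  subst n.
  have az j t : a j t = 0 by rewrite /a (thinmx0 (x j t)) (thinmx0 xstar) subrr.
  have -> : (\int[Q]_t ((f (x k.+1 t) - f xstar)%:E) = 0)%E.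
    by rewrite (eq_integral (cst 0)) ?integral0 // => t _; rewrite -/(a _ _) az.
  have -> : (\int[Q]_t ((f (x k t) - f xstar)%:E) = 0)%E.
    by rewrite (eq_integral (cst 0)) ?integral0 // => t _; rewrite -/(a _ _) az.
  by rewrite mule0 add0e lee_fin.
have tL : tau <= L := tau_le_L f gradf tau L xstar npos tau0 L0 hg sc hL.
have hi0 : 0 < lam_hi by exact: lt_le_trans lohi.
set c := 1 - tau * lam_lo / (L * lam_hi).
have c0 : 0 <= c.
  rewrite /c subr_ge0 ler_pdivrMr ?mulr_gt0 // mul1r.
  by apply: ler_pM => //; exact: ltW.
set K := (2 * L)^-1.
have K0 : 0 <= K by rewrite invr_ge0 mulr_ge0 // ltW.
move: (hb k) => /= [[Z [HZ HZb]] _].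
set sW := fun t => sqnorm (gradf (x k t) -
   (N k)%:R^-1 *: \sum_(j < N k) gradF (x k t) (xi (om j k t))) in HZ HZb.
case: HZ => intS intZ _ eqZ.
have ms : measurable_fun setT sW.
  by have /integrableP [/measurable_EFinP ? _] := intS.
have mZ : measurable_fun setT Z.
  by have /integrableP [/measurable_EFinP ? _] := intZ.
have sW0 t : 0 <= sW t by exact: sqnorm_ge0.
have Hp : {ae Q, forall t, a k.+1 t <= c * a k t + K * sW t}.
  apply: filterS (Hloew k) => t hl.
  rewrite /a hx.
  exact: (step_pointwise f gradf xstar tau L lam_lo lam_hi (x k t) _ (H k t)
           tau0 L0 lo0 lohi hg sc hmin hL (hs k t) hl).
set I := (\int[Q]_t ((f (x k t) - f xstar)%:E))%E.
have I0 : (0 <= I)%E by apply: integral_ge0 => t _; rewrite lee_fin a0.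
have maE j : measurable_fun setT (fun t => (a j t)%:E) by exact/measurable_EFinP.
have msE : measurable_fun setT (fun t => (sW t)%:E) by exact/measurable_EFinP.
have S1 : (\int[Q]_t ((f (x k.+1 t) - f xstar)%:E) <=
           c%:E * I + K%:E * \int[Q]_t (sW t)%:E)%E.
  apply: (@le_trans _ _ (\int[Q]_t ((c%:E * (a k t)%:E) + K%:E * (sW t)%:E))%E).
    apply: ae_ge0_le_integral => //.
    - by move=> t _; rewrite lee_fin a0.
    - exact: maE.
    - by move=> t _; rewrite adde_ge0 // mule_ge0 // lee_fin.
    - apply: emeasurable_funD.
        exact: (measurable_EFinP _ _).2 (measurable_funM (measurable_cst c) (ma k)).
      exact: (measurable_EFinP _ _).2 (measurable_funM (measurable_cst K) ms).
    - by apply: filterS Hp => t h _; rewrite lee_fin.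
  rewrite ge0_integralD //; last 4 first.
  - by move=> t _; rewrite mule_ge0 // lee_fin.
  - exact: (measurable_EFinP _ _).2 (measurable_funM (measurable_cst c) (ma k)).
  - by move=> t _; rewrite mule_ge0 // lee_fin.
  - exact: (measurable_EFinP _ _).2 (measurable_funM (measurable_cst K) ms).
  rewrite ge0_integralZl_EFin //; last by move=> t _; rewrite lee_fin a0.
  rewrite ge0_integralZl_EFin //; try (by move=> t _; rewrite lee_fin); exact: msE.
have HT : gen_sigma x k setT.
  have [h0 hD _] := @smallest_sigma_algebra Theta setT
    [set A | exists j i (B : set R),
         (j < k)%N /\ measurable B /\ A = (fun t => x j t 0 i) @^-1` B].
  by have := hD set0 h0; rewrite setD0.
have Nk0 : 0 < (N k)%:R :> R by rewrite ltr0n.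
set p := 4 * nu1 ^+ 2 / (tau * (N k)%:R).
set q := (2 * nu1 ^+ 2 * sqnorm xstar + nu2 ^+ 2) / (N k)%:R.
have p0 : 0 <= p by apply: divr_ge0; [apply: mulr_ge0 => //; exact: sqr_ge0 | apply: mulr_ge0; exact: ltW].
have q0 : 0 <= q.
  apply: divr_ge0; last exact: ltW.
  apply: addr_ge0; last exact: sqr_ge0.
  apply: mulr_ge0; last exact: sqnorm_ge0.
  by apply: mulr_ge0 => //; exact: sqr_ge0.
set b := fun t => (nu1 ^+ 2 * sqnorm (x k t) + nu2 ^+ 2) / (N k)%:R.
have b0 t : 0 <= b t.
  apply: divr_ge0; last exact: ltW.
  by apply: addr_ge0; [apply: mulr_ge0; [exact: sqr_ge0 | exact: sqnorm_ge0] | exact: sqr_ge0].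
have msq : measurable_fun setT (fun t => sqnorm (x k t)).
  rewrite /sqnorm /dotv; apply: measurable_sum => i.
  exact: measurable_funM.
have mb : measurable_fun setT b.
  apply: measurable_funM; last exact: measurable_cst.
  apply: measurable_funD; last exact: measurable_cst.
  by apply: measurable_funM => //; exact: measurable_cst.
have bpq t : b t <= p * a k t + q.
  have D1 := sqnormD_le (x k t - xstar) xstar.
  rewrite subrK in D1.
  have D2 := dist_bound f tau xstar tau0 sc hmin (x k t).
  rewrite -/(a k t) in D2.
  have D3 : sqnorm (x k t - xstar) <= 2 / tau * a k t.
    have -> : sqnorm (x k t - xstar) = 2 / tau * (tau / 2 * sqnorm (x k t - xstar)).
      by field; rewrite gt_eqF.
    by apply: ler_wpM2l => //; apply: divr_ge0 => //; exact: ltW.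
  have D4 : nu1 ^+ 2 * sqnorm (x k t) <= nu1 ^+ 2 * (2 * (2 / tau * a k t) + 2 * sqnorm xstar).
    apply: ler_wpM2l; first exact: sqr_ge0.
    by apply: le_trans D1 _; rewrite lerD2r ler_wpM2l.
  have -> : p * a k t + q = (nu1 ^+ 2 * (2 * (2 / tau * a k t) + 2 * sqnorm xstar) + nu2 ^+ 2) / (N k)%:R.
    by rewrite /p /q; field; rewrite !gt_eqF.
  rewrite /b ler_pM2r ?invr_gt0 //; lra.
have S2 : (\int[Q]_t (sW t)%:E <= p%:E * I + q%:E)%E.
  rewrite (eqZ setT HT) integralE.
  have Zpb : (\int[Q]_t ((EFin \o Z)^\+ t) <= p%:E * I + q%:E)%E.
    apply: (@le_trans _ _ (\int[Q]_t (b t)%:E)%E).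
      apply: ae_ge0_le_integral => //.
      all: try by move=> t _; rewrite ?lee_fin //; exact: funepos_ge0.
      all: try by apply: measurable_funepos; exact/measurable_EFinP.
      all: try exact/measurable_EFinP.
      + apply: filterS HZb => t h _.
        by rewrite funeposE ge_max /= !lee_fin h b0.
    apply: (@le_trans _ _ (\int[Q]_t ((p%:E * (a k t)%:E) + (cst q%:E) t))%E).
      apply: ge0_le_integral => //.
      - by move=> t _; rewrite lee_fin.
      - exact/measurable_EFinP.
      - apply: emeasurable_funD; last exact: measurable_cst.
        exact: (measurable_EFinP _ _).2 (measurable_funM (measurable_cst p) (ma k)).
      - by move=> t _; rewrite lee_fin.
    rewrite ge0_integralD //.
    all: try by move=> t _; rewrite ?mule_ge0 ?lee_fin.
    all: try exact: (measurable_EFinP _ _).2 (measurable_funM (measurable_cst p) (ma k)).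
    all: try exact: measurable_cst.
    rewrite ge0_integralZl_EFin //; last by move=> t _; rewrite lee_fin a0.
    rewrite integral_cst //.
    rewrite [X in (_ + _ * X <= _)%E](_ : _ = 1%E); last exact: probability_setT.
    by rewrite mule1.
  have fin := @integrable_neg_fin_num _ _ _ Q setT measurableT _ intZ.
  rewrite leeBlDr //; apply: le_trans Zpb _; apply: leeDl.
  by apply: integral_ge0 => t _; exact: funeneg_ge0.
apply: le_trans S1 _.
have S3 : (K%:E * \int[Q]_t (sW t)%:E <= K%:E * (p%:E * I + q%:E))%E.
  by apply: lee_wpmul2l => //; rewrite lee_fin.
apply: le_trans (leeD (lexx _) S3) _.
set M := 2 * nu1 ^+ 2 / (L * tau * (N 0)%:R).
have N00 : 0 < (N 0)%:R :> R by rewrite ltr0n.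
have M0 : 0 < M.
  rewrite /M divr_gt0 //; last by rewrite !mulr_gt0.
  by rewrite mulr_gt0 // exprn_gt0.
have rE : rate = c + M by [].
have Kq : K * q = err by rewrite /K /q /err; field; rewrite !gt_eqF.
have N0k : forall j, (N 0 <= N j)%N.
  by elim=> [//|j IH]; exact: leq_trans IH (Nmono j).
have i1 : (N k)%:R^-1 <= (N 0)%:R^-1 :> R.
  by rewrite lef_pV2 ?posrE // ler_nat.
have Kp : K * p <= M.
  have -> : K * p = 2 * nu1 ^+ 2 / (L * tau) * (N k)%:R^-1.
    by rewrite /K /p; field; rewrite !gt_eqF.
  have -> : M = 2 * nu1 ^+ 2 / (L * tau) * (N 0)%:R^-1.
    by rewrite /M; field; rewrite !gt_eqF.
  apply: ler_wpM2l => //.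
  by apply: divr_ge0; [apply: mulr_ge0 => //; exact: sqr_ge0 | apply: mulr_ge0; exact: ltW].
have rpos : 0 < rate by rewrite rE; lra.
try clear S1; try clear S2; try clear S3; move: I0; clearbody I; case: I => [r| |] //= I0.
  change ((c * r + K * (p * r + q))%:E <= (rate * r + err)%:E)%E.
  rewrite lee_fin -lee_fin in I0.
  rewrite lee_fin mulrDr mulrA Kq rE (mulrDl c M r).
  have : K * p * r <= M * r by apply: ler_wpM2r.
  lra.
rewrite [X in (_ <= X)%E](_ : _ = +oo%E) ?leey //.
by rewrite gt0_muley ?lte_fin // addye.
Qed.
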